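(* In the setting of the context, for every height $h$ with $h_a+1\le h\le h_+$ there is an adversarial block at height $h$ mined during $(\tau,\tau_+]$.
   Context: Model: blocks numbered by mining time $t_j$, labeled honest or adversarial; each non-genesis block has an earlier parent; $h_b$ is height. Honest blocks extend a longest chain in their miner's view and are published immediately; any new longest chain mined or received by an honest node at time $t$ reaches all honest nodes by $t+\Delta$. Target transaction $tx$ appears at time $\tau$ and honest blocks mined after $\tau$ on chains not containing $tx$ include it. Condition 1 holds: all honest blocks are at distinct heights, and honest blocks mined after $\tau$ are higher than honest blocks mined by $\tau$. A chain is public at time $t$ if it is in all honest nodes' views at time $t$; it is credible at time $t$ if it is no shorter than every public chain at time $t$. Fix an attack under which the safety of $tx$ (under the $\kappa$-confirmation rule) is violated. Choose blocks $b,c,d$ minimizing $h_+=\max(h_c,h_d)$ subject to: (1) chain $c$ is credible at time $t_c$, contains $tx$ in block $b$, and $h_c\ge h_b+\kappa-1$; (2) chain $d$ is credible at time $t_d$, $h_d\ge h_b+\kappa-1$, chain $d$ does not contain block $b$, and chain $d$ does not contain $tx$ at heights $\le h_b-1$. Let $\tau_+=\max(t_c,t_d)$, let $u$ be the highest honest block mined by time $\tau$, and let $a$ be the highest block of chain $d$ mined by time $\tau$. *)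

(* Defs.v *)
(* blocks are natural numbers (indexed by mining order),
   times are real numbers (Stdlib R). *)
From Stdlib Require Import Reals Lra Lia.
Open Scope R_scope.

(* Block 0 is the genesis block.  A chain is identified with its tip block;
   "chain y contains block x" means x is an ancestor of y (inclusive).
   Views are those of honest nodes only (every element of [Node] is honest). *)
Record Model := {
  Node : Type;
  t : nat -> R;                    (* mining time of block j *)
  honest : nat -> Prop;
  parent : nat -> nat;
  height : nat -> nat;
  miner : nat -> Node;             (* miner of an honest block *)
  view : Node -> R -> nat -> Prop; (* view n s c : chain c is in n's view at time s *)
  Delta : R;
  tau : R;                         (* time at which the target tx appears *)
  txin : nat -> Prop;              (* block includes the target transaction tx *)

  t_mono : forall j k, (j < k)%nat -> t j < t k;
  parent_lt : forall b, (0 < b)%nat -> (parent b < b)%nat;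
  height_0 : height 0%nat = 0%nat;
  height_S : forall b, (0 < b)%nat -> height b = S (height (parent b));

  view_mined : forall n s c, view n s c -> t c <= s;
  view_mono : forall n s s' c, s <= s' -> view n s c -> view n s' c;
  view_parent : forall n s c, view n s c -> view n s (parent c);

  honest_ext : forall b, (0 < b)%nat -> honest b ->
      view (miner b) (t b) (parent b) /\
      (forall c, view (miner b) (t b) c -> c <> b ->
                 (height c <= height (parent b))%nat);
  honest_pub : forall b, (0 < b)%nat -> honest b -> view (miner b) (t b) b;

  Delta_nonneg : 0 <= Delta;
  propagate : forall n s c, view n s c ->
      (forall c', view n s c' -> (height c' <= height c)%nat) ->
      forall m, view m (s + Delta) c;

  tx_after : forall b, txin b -> tau < t b;
  tx_honest : forall b, (0 < b)%nat -> honest b -> tau < t b ->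
      ~ (exists k, txin (Nat.iter k parent (parent b))) -> txin b
}.

Definition contains (M : Model) (y x : nat) : Prop :=
  exists k, Nat.iter k (parent M) y = x.

Definition Condition1 (M : Model) : Prop :=
  (forall b b', honest M b -> honest M b' -> height M b = height M b' -> b = b') /\
  (forall b b', honest M b -> honest M b' -> t M b <= tau M -> tau M < t M b' ->
     (height M b < height M b')%nat).

Definition public (M : Model) (s : R) (c : nat) : Prop :=
  forall n : Node M, view M n s c.

Definition credible (M : Model) (s : R) (c : nat) : Prop :=
  forall c', public M s c' -> (height M c' <= height M c)%nat.

Definition valid_triple (M : Model) (kappa b c d : nat) : Prop :=
  (credible M (t M c) c /\ contains M c b /\ txin M b /\
   (height M b + kappa - 1 <= height M c)%nat) /\
  (credible M (t M d) d /\ (height M b + kappa - 1 <= height M d)%nat /\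
   ~ contains M d b /\
   (forall x, contains M d x -> (height M x <= height M b - 1)%nat -> ~ txin M x)).

(* Main.v *)
Require Import Defs.
From Stdlib Require Import Reals Lra Lia Classical Arith.
Open Scope R_scope.

Section H.
Variable M : Model.
Notation iter k y := (Nat.iter k (parent M) y).

Lemma iter_add a b0 y : iter (a + b0) y = iter a (iter b0 y).
Proof. induction a; simpl; congruence. Qed.

Lemma height0 x : height M x = 0%nat -> x = 0%nat.
Proof. destruct x; auto. intro H. rewrite (height_S M (S x)) in H; [discriminate|lia]. Qed.

Lemma anc_props y k : (k <= height M y)%nat ->
  height M (iter k y) = (height M y - k)%nat /\ (iter k y <= y)%nat.
Proof.
  induction k; intros Hk; simpl. split; lia.
  destruct IHk as [H1 H2]; [lia|].
  assert (Hp : (0 < iter k y)%nat).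
  { destruct (iter k y) eqn:E; [|lia]. rewrite height_0 in H1. lia. }
  pose proof (height_S M _ Hp). pose proof (parent_lt M _ Hp). split; lia.
Qed.

Lemma t_le i j : (i <= j)%nat -> t M i <= t M j.
Proof. intros H. destruct (Nat.eq_dec i j). subst; lra. left; apply t_mono; lia. Qed.

Lemma contains_cases y x : contains M y x ->
  (exists k, (k <= height M y)%nat /\ iter k y = x) \/ (forall z, contains M z x).
Proof.
  intros [m Hm]. destruct (le_lt_dec m (height M y)). left; eauto.
  right. intro z.
  assert (Ht : forall w, iter (height M w) w = 0%nat).
  { intro w. apply height0. destruct (anc_props w (height M w)) as [A _]; lia. }
  exists (m - height M y + height M z)%nat.
  rewrite iter_add, Ht, <- (Ht y), <- iter_add, <- Hm. f_equal. lia.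
Qed.

Lemma contains_trans y x w : contains M y x -> contains M x w -> contains M y w.
Proof. intros [a1 H1] [a2 H2]. exists (a2 + a1)%nat. rewrite iter_add, H1; auto. Qed.

Lemma view_iter n s y k : view M n s y -> view M n s (iter k y).
Proof. intros H; induction k; simpl; auto. apply view_parent; auto. Qed.

Lemma honest_credible e : (0 < e)%nat -> honest M e -> credible M (t M e) e.
Proof.
  intros H0 Hh c' Hp. pose proof (Hp (miner M e)) as V.
  destruct (Nat.eq_dec c' e). subst; lia.
  destruct (honest_ext M e H0 Hh) as [_ H]. pose proof (H c' V n).
  pose proof (height_S M e H0). lia.
Qed.

Lemma honest_parent_credible e : (0 < e)%nat -> honest M e ->
  credible M (t M (parent M e)) (parent M e).
Proof.
  intros H0 Hh c' Hp. pose proof (Hp (miner M e)) as V.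
  pose proof (parent_lt M e H0) as Hlt.
  pose proof (t_mono M _ _ Hlt).
  destruct (Nat.eq_dec c' e).
  - subst. apply view_mined in V. lra.
  - destruct (honest_ext M e H0 Hh) as [_ Hx]. apply (Hx c'); auto.
    eapply view_mono; [|exact V]. lra.
Qed.
End H.

Theorem mainTheorem6 (M : Model) (kappa b c d a h : nat) :
  Condition1 M ->
  (1 <= kappa)%nat ->
  valid_triple M kappa b c d ->
  (forall b' c' d', valid_triple M kappa b' c' d' ->
     (Nat.max (height M c) (height M d) <= Nat.max (height M c') (height M d'))%nat) ->
  (* a is the highest block of chain d mined by time tau *)
  contains M d a -> t M a <= tau M ->
  (forall a', contains M d a' -> t M a' <= tau M -> (height M a' <= height M a)%nat) ->
  (height M a + 1 <= h)%nat -> (h <= Nat.max (height M c) (height M d))%nat ->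
  exists e, ~ honest M e /\ height M e = h /\
            tau M < t M e /\ t M e <= Rmax (t M c) (t M d).
Proof.
  intros HC Hk Hv Hmin Hda Hta Hamax Hh1 Hh2.
  destruct Hv as [[Ccred [Ccb [Btx Chb]]] [Dcred [Dhb [Dnb Dtx]]]].
  destruct (contains_cases M _ _ Ccb) as [[m [Hm Hbm]] | Hall];
    [| exfalso; apply Dnb, Hall].
  destruct (anc_props M c m Hm) as [Hhb Hib]. rewrite Hbm in Hhb, Hib.
  pose proof (tx_after M b Btx) as Htb.
  apply NNPP; intro Hno.
  assert (Hhon : forall e, height M e = h -> tau M < t M e ->
             t M e <= Rmax (t M c) (t M d) -> honest M e).
  { intros e H1 H2 H3. apply NNPP; intro H4. apply Hno; exists e; auto. }
  pose proof (Rmax_l (t M c) (t M d)). pose proof (Rmax_r (t M c) (t M d)).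
  destruct HC as [HC1 _].
  assert (Hec : (height M b <= h)%nat -> (h <= height M c)%nat ->
     let ec := Nat.iter (height M c - h) (parent M) c in
     height M ec = h /\ honest M ec /\ contains M ec b /\ contains M c ec /\ (0 < ec)%nat).
  { intros H1 H2 ec.
    destruct (anc_props M c (height M c - h)) as [E1 E2]; [lia|].
    fold ec in E1, E2.
    assert (Hb' : Nat.iter (m - (height M c - h)) (parent M) ec = b).
    { unfold ec. rewrite <- iter_add. rewrite <- Hbm. f_equal. lia. }
    destruct (anc_props M ec (m - (height M c - h))) as [_ E3]; [lia|].
    rewrite Hb' in E3.
    assert (ht : tau M < t M ec) by (pose proof (t_le M _ _ E3); lra).
    assert (ht2 : t M ec <= Rmax (t M c) (t M d)) by (pose proof (t_le M _ _ E2); lra).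
    repeat split.
    - lia.
    - apply Hhon; auto; lia.
    - exists (m - (height M c - h))%nat; auto.
    - exists (height M c - h)%nat; auto.
    - destruct ec; [|lia]. rewrite height_0 in E1. lia. }
  destruct (le_lt_dec h (height M d)) as [Hd | Hd].
  - set (ed := Nat.iter (height M d - h) (parent M) d).
    destruct (anc_props M d (height M d - h)) as [E1 E2]; [lia|].
    fold ed in E1, E2.
    assert (Hcd : contains M d ed) by (exists (height M d - h)%nat; auto).
    assert (ht : tau M < t M ed).
    { destruct (Rle_lt_dec (t M ed) (tau M)) as [X|X]; auto.
      pose proof (Hamax _ Hcd X). lia. }
    assert (ht2 : t M ed <= Rmax (t M c) (t M d)) by (pose proof (t_le M _ _ E2); lra).
    assert (Hhe : honest M ed) by (apply Hhon; auto; lia).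
    assert (He0 : (0 < ed)%nat).
    { destruct ed; [|lia]. rewrite height_0 in E1. lia. }
    destruct (lt_dec h (height M b)) as [Hlb | Hlb].
    +
      destruct (classic (exists k, txin M (Nat.iter k (parent M) (parent M ed)))) as [[k Hx]|Hx].
      * set (x := Nat.iter k (parent M) (parent M ed)) in Hx.
        assert (Hdx : contains M d x).
        { apply (contains_trans M _ ed); auto. exists (k + 1)%nat. unfold x.
          rewrite iter_add. reflexivity. }
        destruct (honest_ext M ed He0 Hhe) as [V W].
        pose proof (view_iter M _ _ _ k V) as Vx. fold x in Vx.
        pose proof (height_S M ed He0).
        assert (height M x <= height M b - 1)%nat.
        { destruct (Nat.eq_dec x ed). subst x; rewrite e; lia.
          pose proof (W x Vx n). lia. }
        exact (Dtx x Hdx H2 Hx).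
      * pose proof (tx_honest M ed He0 Hhe ht Hx).
        apply (Dtx ed Hcd); auto. lia.
    + destruct (le_lt_dec h (height M c)) as [Hc | Hc].
      * destruct (Hec ltac:(lia) Hc) as [F1 [F2 [F3 [F4 _]]]].
        set (ec := Nat.iter (height M c - h) (parent M) c) in *.
        assert (ec = ed) by (apply HC1; auto; lia).
        apply Dnb. apply (contains_trans M _ ed); auto. rewrite <- H1; auto.
      * assert (Vt : valid_triple M kappa b c ed).
        { split; [repeat split; auto|]. split; [apply honest_credible; auto|].
          split; [lia|]. split.
          - intro X; apply Dnb; apply (contains_trans M _ ed); auto.
          - intros x X; apply Dtx; apply (contains_trans M _ ed); auto. }
        pose proof (Hmin _ _ _ Vt).
        assert (ed = d).
        { assert (height M d - h = 0)%nat by lia. unfold ed; rewrite H2; reflexivity. }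
        rewrite H2 in Hhe, He0.
        assert (Vt2 : valid_triple M kappa b c (parent M d)).
        { pose proof (height_S M d He0).
          split; [repeat split; auto|]. split; [apply honest_parent_credible; auto|].
          split; [lia|]. split.
          - intro X; apply Dnb; apply (contains_trans M _ (parent M d)); auto.
            exists 1%nat; reflexivity.
          - intros x X; apply Dtx; apply (contains_trans M _ (parent M d)); auto.
            exists 1%nat; reflexivity. }
        pose proof (Hmin _ _ _ Vt2). pose proof (height_S M d He0). lia.
  - destruct (Hec ltac:(lia) ltac:(lia)) as [F1 [F2 [F3 [F4 F5]]]].
    set (ec := Nat.iter (height M c - h) (parent M) c) in *.
    assert (Vt : valid_triple M kappa b ec d).
    { split; [|repeat split; auto]. split; [apply honest_credible; auto|].
      repeat split; auto. lia. }
    pose proof (Hmin _ _ _ Vt).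
    assert (ec = c).
    { assert (height M c - h = 0)%nat by lia. unfold ec; rewrite H2; reflexivity. }
    rewrite H2 in F2, F5.
    pose proof (height_S M c F5).
    assert (Vt2 : valid_triple M kappa b (parent M c) d).
    { split; [|repeat split; auto]. split; [apply honest_parent_credible; auto|].
      split; [|split; [auto|lia]].
      exists (m - 1)%nat. rewrite <- Hbm. change (parent M c) with (Nat.iter 1 (parent M) c).
      rewrite <- iter_add. f_equal. lia. }
    pose proof (Hmin _ _ _ Vt2). lia.
Qed.
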